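(* Consider the discrete all-pay auction in the model without ties, with values drawn i.i.d. from a distribution with full support on $X$. There is at most one symmetric equilibrium bidding function: if $\beta$ and $\beta'$ are both SE bidding functions then $\beta=\beta'$.
   Context: Model. There are $n\ge 2$ risk-neutral bidders competing for one indivisible object. Normalise the grid so that values and bids lie in $X=\{0,1,2,\dots,x\}$ for some $x\in\mathbb N$. Each bidder $i$ privately learns a value $v_i\in X$; values are drawn independently from a common distribution in which every element of $X$ has strictly positive probability. Each bidder submits a bid $b_i\in X$. A (pure) strategy is a bidding function $\beta:X\to X$. In the model without ties, bidder $i$ wins iff $b_i>b_j$ for all $j\neq i$ (if the highest bid is tied, nobody wins). In the all-pay auction, a bidder with value $v_i$ bidding $b_i$ gets expected payoff $v_i\Pr(i\text{ wins})-b_i$ (everyone pays their bid). An equilibrium is a profile of bidding functions such that each bidder's bidding function maximises their expected payoff given the others' bidding functions (a pure-strategy Bayes–Nash equilibrium) and such that no bidder uses a weakly dominated bidding function (a bidding function is weakly dominated if some other bidding function yields at least as high expected payoff against every profile of opponents' bidding functions, and strictly higher against some). A symmetric equilibrium (SE) is an equilibrium in which all bidders use the same bidding function $\beta$. *)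

(* Defs.v *)
From mathcomp Require Import all_boot all_order all_algebra.
Set Implicit Arguments. Unset Strict Implicit. Unset Printing Implicit Defensive.
Import Order.TTheory GRing.Theory Num.Theory.
Local Open Scope ring_scope.

Notation grid x := 'I_x.+1.

Definition bidfun (x : nat) := {ffun grid x -> grid x}.

Definition full_support_distr (R : realFieldType) (x : nat) (p : grid x -> R) :=
  (forall v, 0 < p v) /\ \sum_(v : grid x) p v = 1.

Definition prob_bid_below (R : realFieldType) (x : nat) (p : grid x -> R)
  (beta : bidfun x) (b : grid x) : R :=
  \sum_(v : grid x | (beta v < b)%N) p v.

(* Probability that bidder i with bid b wins (no ties: strictly above every other bid),
   when the other bidders j use prof j; values are independent. *)
Definition win_prob (R : realFieldType) (x n : nat) (p : grid x -> R)
  (prof : 'I_n -> bidfun x) (i : 'I_n) (b : grid x) : R :=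
  \prod_(j < n | j != i) prob_bid_below p (prof j) b.

(* Expected (ex-ante) payoff in the all-pay auction of bidder i using [beta]
   when the opponents j != i use prof j (prof i is ignored). *)
Definition allpay_payoff (R : realFieldType) (x n : nat) (p : grid x -> R)
  (prof : 'I_n -> bidfun x) (i : 'I_n) (beta : bidfun x) : R :=
  \sum_(v : grid x) p v *
     ((nat_of_ord v)%:R * win_prob p prof i (beta v) - (nat_of_ord (beta v))%:R).

Definition weakly_dominated (R : realFieldType) (x n : nat) (p : grid x -> R)
  (i : 'I_n) (beta : bidfun x) : Prop :=
  exists beta' : bidfun x,
    (forall prof : 'I_n -> bidfun x,
        allpay_payoff p prof i beta <= allpay_payoff p prof i beta') /\
    (exists prof : 'I_n -> bidfun x,
        allpay_payoff p prof i beta < allpay_payoff p prof i beta').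

Definition equilibrium (R : realFieldType) (x n : nat) (p : grid x -> R)
  (prof : 'I_n -> bidfun x) : Prop :=
  (forall (i : 'I_n) (beta' : bidfun x),
      allpay_payoff p prof i beta' <= allpay_payoff p prof i (prof i)) /\
  (forall i : 'I_n, ~ weakly_dominated p i (prof i)).

Definition symmetric_equilibrium (R : realFieldType) (x n : nat) (p : grid x -> R)
  (beta : bidfun x) : Prop :=
  equilibrium p (fun _ : 'I_n => beta).

(* Main.v *)
Require Import Defs.
From mathcomp Require Import all_boot all_order all_algebra.
From mathcomp Require Import ring lra.
Import Order.TTheory GRing.Theory Num.Theory.
Local Open Scope ring_scope.

Lemma arith (R : realFieldType) (A B C c d : R) :
  C - c <= B - d -> A - (c + 1) <= C - c -> c + 1 <= d -> A - B <= 0.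
Proof. move=> h1 h2 h3. lra. Qed.

Section S.
Variables (R : realFieldType) (x n : nat) (p : 'I_x.+1 -> R).
Hypothesis hn : (2 <= n)%N.
Hypothesis hp : full_support_distr p.

Definition i0 : 'I_n := Ordinal (ltnW hn).

Definition G (b : bidfun x) (c : grid x) := prob_bid_below p b c.

Lemma p_ge0 v : 0 <= p v.
Proof. by apply: ltW; case: hp. Qed.

Lemma G_ge0 b c : 0 <= G b c.
Proof. by apply: sumr_ge0 => u _; apply: p_ge0. Qed.

Lemma winE (b : bidfun x) (i : 'I_n) c :
  win_prob p (fun _ => b) i c = G b c ^+ n.-1.
Proof.
rewrite /win_prob.
have -> : \prod_(j < n | j != i) prob_bid_below p b c =
          \prod_(j in predC1 i) prob_bid_below p b c by apply: eq_bigl.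
by rewrite prodr_const cardC1 card_ord.
Qed.

Definition W (b : bidfun x) c := G b c ^+ n.-1.

Lemma BR (b : bidfun x) : symmetric_equilibrium n p b ->
  forall (v c : grid x),
  (v : nat)%:R * W b c - (c : nat)%:R <= (v : nat)%:R * W b (b v) - (b v : nat)%:R.
Proof.
move=> [eq _] v c.
pose b2 : bidfun x := [ffun u => if u == v then c else b u].
have := eq i0 b2.
rewrite /allpay_payoff (bigD1 v) //= [X in _ <= X](bigD1 v) //=.
have -> : \sum_(i < x.+1 | i != v) p i * ((i : nat)%:R * win_prob p (fun _ : 'I_n => b) i0 (b2 i) - (b2 i : nat)%:R)
  = \sum_(i < x.+1 | i != v) p i * ((i : nat)%:R * win_prob p (fun _ : 'I_n => b) i0 (b i) - (b i : nat)%:R).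
  by apply: eq_bigr => u /negbTE hu; rewrite /b2 ffunE hu.
rewrite lerD2r /b2 ffunE eqxx !winE.
by rewrite ler_pM2l //; case: hp.
Qed.

Lemma G_mono (b : bidfun x) (c d : grid x) : (c <= d)%N -> G b c <= G b d.
Proof.
move=> cd; rewrite /G /prob_bid_below [X in X <= _]big_mkcond [X in _ <= X]big_mkcond.
apply: ler_sum => u _.
case: ifP => h1; first by rewrite (leq_trans h1 cd).
by case: ifP => _ //; apply: p_ge0.
Qed.

Lemma W_mono (b : bidfun x) (c d : grid x) : (c <= d)%N -> W b c <= W b d.
Proof.
move=> cd; rewrite /W; apply: lerXn2r; rewrite ?nnegrE ?G_ge0 //.
exact: G_mono.
Qed.

Lemma mono (b : bidfun x) : symmetric_equilibrium n p b ->
  forall v w : grid x, (v <= w)%N -> (b v <= b w)%N.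
Proof.
move=> se v w; rewrite leq_eqVlt => /orP [/eqP e|vw].
  by have -> : v = w by apply: val_inj.
rewrite leqNgt; apply/negP => lt.
have h1 := BR b se v (b w).
have h2 := BR b se w (b v).
have hW := W_mono b (b w) (b v) (ltnW lt).
have hvw : (v : nat)%:R + 1 <= (w : nat)%:R :> R by rewrite natr1 ler_nat.
have hc : (b w : nat)%:R + 1 <= (b v : nat)%:R :> R by rewrite natr1 ler_nat.
have hv0 : 0 <= (v : nat)%:R :> R by [].
set D := W b (b v) - W b (b w).
have hD : 0 <= D by rewrite subr_ge0.
have e1 : W b (b v) = W b (b w) + D by rewrite /D; ring.
rewrite e1 in h1 h2.
nra.
Qed.

Lemma zero0 (b : bidfun x) : symmetric_equilibrium n p b -> (b ord0 : nat) = 0%N.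
Proof.
move=> [_ und]; apply/eqP; rewrite -leqn0 leqNgt; apply/negP => pos.
apply: (und i0).
pose b2 : bidfun x := [ffun u => if u == ord0 then ord0 else b u].
have key : forall prof, allpay_payoff p prof i0 b < allpay_payoff p prof i0 b2.
  move=> prof; rewrite /allpay_payoff (bigD1 ord0) //= [X in _ < X](bigD1 ord0) //=.
  have -> : \sum_(i < x.+1 | i != ord0) p i * ((i : nat)%:R * win_prob p prof i0 (b2 i) - (b2 i : nat)%:R)
    = \sum_(i < x.+1 | i != ord0) p i * ((i : nat)%:R * win_prob p prof i0 (b i) - (b i : nat)%:R).
    by apply: eq_bigr => u /negbTE hu; rewrite /b2 ffunE hu.
  rewrite ltrD2r /b2 ffunE eqxx /= !mul0r !sub0r mulrN.
  rewrite oppr0 mulr0 oppr_lt0 mulr_gt0 // ?ltr0n //; by case: hp.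
exists b2; split.
  by move=> prof; apply: ltW.
by exists (fun _ => b).
Qed.

Lemma asym (b b' : bidfun x) : symmetric_equilibrium n p b -> symmetric_equilibrium n p b' ->
  forall v : grid x, (forall u : grid x, (u < v)%N -> b u = b' u) -> ~ (b v < b' v)%N.
Proof.
move=> se se' v agree lt.
have vpos : (0 < v)%N.
  rewrite lt0n; apply/negP => /eqP v0.
  have ev : v = ord0 by apply: val_inj.
  by move: lt; rewrite ev (zero0 b se) (zero0 b' se').
have hc : ((b v).+1 < x.+1)%N by apply: leq_ltn_trans lt (ltn_ord _).
pose b1 : grid x := Ordinal hc.
have GW : G b (b v) = G b' (b v).
  apply: eq_bigl => u; case: (ltnP u v) => [ul|ug]; first by rewrite agree.
  have m1 := mono b se _ _ ug; have m2 := mono b' se' _ _ ug.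
  rewrite ltnNge m1 /=; apply/esym/negbTE; rewrite -leqNgt.
  exact: leq_trans (ltnW lt) m2.
have G'eq : G b' b1 = G b' (b' v).
  apply: eq_bigl => u /=; case: (ltnP u v) => [ul|ug].
    rewrite -agree //; have m1 := mono b se _ _ (ltnW ul).
    by rewrite ltnS m1 (leq_ltn_trans m1 lt).
  have m2 := mono b' se' _ _ ug.
  rewrite ltnNge (leq_trans lt m2) /= ltnNge m2 //.
have Gs : G b' b1 + p v <= G b b1.
  rewrite [G b b1]/G /prob_bid_below (bigD1 v) /=; last by rewrite ltnS.
  rewrite [G b' b1 + _]addrC lerD2l /G /prob_bid_below big_mkcond [X in _ <= X]big_mkcond /=.
  apply: ler_sum => u _; case: ifP => h; last by case: ifP => _ //; apply: p_ge0.
  have ul : (u < v)%N.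
    rewrite ltnNge; apply/negP => ug; have m2 := mono b' se' _ _ ug.
    by move: h; rewrite ltnS leqNgt (leq_trans lt m2).
  by rewrite agree // h /= neq_ltn ul.
have Wlt : W b' b1 < W b b1.
  rewrite /W ltrXn2r ?G_ge0 //.
    by rewrite -lt0n -ltnS prednK ?(ltnW hn) // (leq_trans _ hn).
  have := p_ge0 v; have : 0 < p v by case: hp.
  move=> pv _; apply: lt_le_trans Gs; rewrite ltrDl //.
have h1 := BR b' se' v (b v).
have h2 := BR b se v b1.
have e1 : W b' (b' v) = W b' b1 by rewrite /W G'eq.
have e2 : W b' (b v) = W b (b v) by rewrite /W GW.
rewrite e1 e2 in h1.
have hbv : ((b v : nat)%:R + 1 <= (b' v : nat)%:R :> R) by rewrite natr1 ler_nat.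
have hb1 : ((b1 : nat)%:R = (b v : nat)%:R + 1 :> R) by rewrite /= natr1.
rewrite hb1 in h2.
have hvp : 0 < (v : nat)%:R :> R by rewrite ltr0n.
have key : 0 < (v : nat)%:R * (W b b1 - W b' b1) by rewrite mulr_gt0 // subr_gt0.
rewrite mulrBr in key.
have H := @arith _ _ _ _ _ _ h1 h2 hbv.
by have := lt_le_trans key H; rewrite ltxx.
Qed.

Lemma main (beta beta' : bidfun x) :
  symmetric_equilibrium n p beta -> symmetric_equilibrium n p beta' ->
  beta = beta'.
Proof.
move=> se se'; apply/ffunP.
suff H : forall k (v : grid x), (v < k)%N -> beta v = beta' v.
  by move=> v; apply: H (ltnSn v).
elim=> [//|k IH] v; rewrite ltnS leq_eqVlt => /orP[/eqP e|]; last exact: IH.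
have ag : forall u : grid x, (u < v)%N -> beta u = beta' u by move=> u; rewrite e; apply: IH.
apply: ord_inj; apply/eqP; rewrite eqn_leq; apply/andP; split; rewrite leqNgt; apply/negP.
  by apply: (asym beta' beta se' se) => u /ag ->.
exact: (asym beta beta' se se').
Qed.

End S.

Theorem lemma11 (R : realFieldType) (x n : nat) (p : 'I_x.+1 -> R)
  (hn : (2 <= n)%N) (hp : full_support_distr p)
  (beta beta' : bidfun x) :
  symmetric_equilibrium n p beta -> symmetric_equilibrium n p beta' ->
  beta = beta'.
Proof. exact: main. Qed.
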